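(* Let $G$ be a simple connected undirected graph with vertex set $V(G)=\{1,2,\ldots,n\}$. Define the coefficient matrix $A$, indexed by pairs $(u,v)$ with $1\le u<v\le n$ and pairs $(i,j)$ with $1\le i<j\le n$, by $A_{(u,v),(i,j)}=1$ if $d(u,i)\neq d(v,i)$ and $d(u,j)\neq d(v,j)$, and $A_{(u,v),(i,j)}=0$ otherwise. For a subset $W\subseteq V(G)$, let $x_k=1$ if $k\in W$ and $x_k=0$ otherwise ($1\le k\le n$), and let $y_{ij}=1$ if $i,j\in W$ and $y_{ij}=0$ otherwise ($1\le i<j\le n$). Then $W$ is a fault-tolerant resolving set of $G$ if and only if the following constraints are satisfied: (a) $\sum_{i=1}^{n-1}\sum_{j=i+1}^{n} A_{(u,v),(i,j)}\,y_{ij}\ge 1$ for all $1\le u<v\le n$; (b) $y_{ij}\le \tfrac12 x_i+\tfrac12 x_j$ for all $1\le i<j\le n$; (c) $y_{ij}\ge x_i+x_j-1$ for all $1\le i<j\le n$; (d) $y_{ij}\in\{0,1\}$ and $x_k\in\{0,1\}$ for all $1\le i<j\le n$, $1\le k\le n$.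
   Context: $d(u,v)$ denotes the length of a shortest $u$–$v$ path in $G$. A vertex $w$ resolves vertices $u,v$ if $d(u,w)\neq d(v,w)$. A set $W\subseteq V(G)$ is a resolving set if every two distinct vertices of $G$ are resolved by some vertex of $W$. A resolving set $W$ is fault-tolerant if $W\setminus\{w\}$ is also a resolving set of $G$ for each $w\in W$. *)

(* Defs.v *)
From mathcomp Require Import all_boot all_order all_algebra.
Set Implicit Arguments. Unset Strict Implicit. Unset Printing Implicit Defensive.
Import Order.TTheory GRing.Theory Num.Theory.

Section Graphs.
Variable T : finType.
Variable e : rel T.

Definition simple_graph := symmetric e /\ irreflexive e.
Definition connected_graph := forall u v : T, connect e u v.

Definition walk_of_length (k : nat) (u v : T) : bool :=
  [exists p : k.-tuple T, path e u p && (last u p == v)].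

(* d(u,v): the least k (< #|T|) admitting a u-v walk of length k, i.e. the
   length of a shortest u-v path.  In a connected graph such a k always exists
   (a shortest path has at most #|T|-1 edges); otherwise the value is #|T|. *)
Definition dist (u v : T) : nat :=
  find (fun k => walk_of_length k u v) (iota 0 #|T|).

Definition resolves (w u v : T) : bool := dist u w != dist v w.

Definition resolving_set (W : {set T}) : Prop :=
  forall u v : T, u != v -> exists2 w, w \in W & resolves w u v.

Definition fault_tolerant_resolving_set (W : {set T}) : Prop :=
  resolving_set W /\ forall w, w \in W -> resolving_set (W :\ w).
End Graphs.

Local Open Scope ring_scope.

Definition coefA (n : nat) (e : rel 'I_n) (u v i j : 'I_n) : rat :=
  ((dist e u i != dist e v i) && (dist e u j != dist e v j))%:R.

Definition xvar (n : nat) (W : {set 'I_n}) (k : 'I_n) : rat := (k \in W)%:R.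
Definition yvar (n : nat) (W : {set 'I_n}) (i j : 'I_n) : rat :=
  ((i \in W) && (j \in W))%:R.

(* Main.v *)
Require Import Defs.
From mathcomp Require Import all_boot all_order all_algebra.
From mathcomp Require Import lra.
Import Order.TTheory GRing.Theory Num.Theory.
Local Open Scope ring_scope.

Definition twores {n : nat} (e : rel 'I_n) (W : {set 'I_n}) (u v : 'I_n) : bool :=
  [exists i : 'I_n, [exists j : 'I_n, [&& (i < j)%N, i \in W, j \in W,
     resolves e i u v & resolves e j u v]]].

Lemma term_eq (n : nat) (e : rel 'I_n) (W : {set 'I_n}) (u v i j : 'I_n) :
  coefA e u v i j * yvar W i j =
  ([&& i \in W, j \in W, resolves e i u v & resolves e j u v])%:R.
Proof.
rewrite /coefA /yvar /resolves -natrM mulnb.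
by case: (_ \in W); case: (_ \in W); case: (dist e u i != _); case: (dist e u j != _).
Qed.

Lemma sum_ge1 (n : nat) (e : rel 'I_n) (W : {set 'I_n}) (u v : 'I_n) :
  (1 <= \sum_(i < n) \sum_(j < n | (i < j)%N) coefA e u v i j * yvar W i j)
  <-> twores e W u v.
Proof.
split.
- move=> H; case: (boolP (twores e W u v)) => // /negP Hn.
  have : \sum_(i < n) \sum_(j < n | (i < j)%N) coefA e u v i j * yvar W i j = 0.
    apply: big1 => i _; apply: big1 => j Hij; rewrite term_eq.
    case E: [&& _, _, _ & _] => //.
    exfalso; apply: Hn; apply/existsP; exists i; apply/existsP; exists j.
    by rewrite Hij E.
  by move=> H0; move: H; rewrite H0 ler10.
- case/existsP => i /existsP [j /andP [Hij Hr]].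
  rewrite (bigD1 i) //= (bigD1 j) //= term_eq Hr /=.
  rewrite -addrA ler_wpDr //.
  apply: addr_ge0.
    by apply: sumr_ge0 => k _; rewrite term_eq ler0n.
  by apply: sumr_ge0 => k _; apply: sumr_ge0 => l _; rewrite term_eq ler0n.
Qed.

Lemma resolvesC (n : nat) (e : rel 'I_n) (w u v : 'I_n) :
  resolves e w u v = resolves e w v u.
Proof. by rewrite /resolves eq_sym. Qed.

Lemma ft_iff (n : nat) (e : rel 'I_n) (W : {set 'I_n}) :
  fault_tolerant_resolving_set e W <->
  (forall u v : 'I_n, (u < v)%N -> twores e W u v).
Proof.
split.
- move=> [HR HF] u v Huv.
  have Hne : u != v by rewrite neq_ltn Huv.
  case: (HR u v Hne) => i Hi Ri.
  case: (HF i Hi u v Hne) => j /setD1P [Hji Hj] Rj.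
  case: (ltngtP i j) => Hij.
  + by apply/existsP; exists i; apply/existsP; exists j; rewrite Hij Hi Hj Ri Rj.
  + by apply/existsP; exists j; apply/existsP; exists i; rewrite Hij Hi Hj Ri Rj.
  + by move: Hji; rewrite (val_inj Hij) eqxx.
- move=> H.
  have H2 : forall u v : 'I_n, u != v -> twores e W u v.
    move=> u v Hne; case: (ltngtP u v) => Huv.
    + exact: H.
    + have := H _ _ Huv; case/existsP => i /existsP [j /and5P [a b c d f]].
      by apply/existsP; exists i; apply/existsP; exists j;
        rewrite a b c resolvesC d resolvesC f.
    + by move: Hne; rewrite (val_inj Huv) eqxx.
  split.
  + move=> u v Hne; case/existsP: (H2 u v Hne) => i /existsP [j /and5P [a b c d f]].
    by exists i.
  + move=> w Hw u v Hne.
    case/existsP: (H2 u v Hne) => i /existsP [j /and5P [a b c d f]].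
    case: (eqVneq w i) => Hwi.
    * exists j => //; apply/setD1P; split => //.
      by rewrite Hwi neq_ltn a orbT.
    * exists i => //; apply/setD1P; split => //; by rewrite eq_sym.
Qed.

Theorem proposition2p3 (n : nat) (e : rel 'I_n)
  (Hsimple : simple_graph e) (Hconn : connected_graph e) (W : {set 'I_n}) :
  fault_tolerant_resolving_set e W <->
  [/\ (forall u v : 'I_n, (u < v)%N ->
         1 <= \sum_(i < n) \sum_(j < n | (i < j)%N) coefA e u v i j * yvar W i j),
      (forall i j : 'I_n, (i < j)%N ->
         yvar W i j <= 2^-1 * xvar W i + 2^-1 * xvar W j),
      (forall i j : 'I_n, (i < j)%N ->
         xvar W i + xvar W j - 1 <= yvar W i j) &
      ((forall i j : 'I_n, (i < j)%N -> yvar W i j = 0 \/ yvar W i j = 1) /\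
       (forall k : 'I_n, xvar W k = 0 \/ xvar W k = 1))].
Proof.
split.
- move/ft_iff=> H; split.
  + by move=> u v Huv; apply/sum_ge1; apply: H.
  + move=> i j _; rewrite /yvar /xvar.
    case: (i \in W); case: (j \in W) => /=.
    all: rewrite ?(mulr1, mulr0, addr0, add0r) ?invr_ge0 ?ler0n //.
  + move=> i j _; rewrite /yvar /xvar.
    by case: (i \in W); case: (j \in W) => /=; rewrite ?add0r ?addr0 ?addrK ?subrr // ?subr_le0 ?ler01.
  + split.
    * by move=> i j _; rewrite /yvar; case: (_ && _); [right|left].
    * by move=> k; rewrite /xvar; case: (_ \in _); [right|left].
- by case=> Ha _ _ _; apply/ft_iff => u v Huv; apply/sum_ge1; apply: Ha.
Qed.
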